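(* Assume $\mathrm{char}\,K\ne2$, $\prod_{i=1}^{n-1}(1+q^i)=0$, and $\mathcal H(D_n)$, $\mathcal H(D_{n-1})$ are split over $K$. Let $\lambda\in\mathcal P_n$ with $\lambda=h(\lambda)$. Then there is an $\mathcal H(D_{n-1})$-module isomorphism $$\mathrm{soc}\bigl(D_+^{\lambda}\!\downarrow_{\mathcal H(D_{n-1})}\bigr)\cong\mathrm{soc}\bigl(D_-^{\lambda}\!\downarrow_{\mathcal H(D_{n-1})}\bigr).$$
   Context: $K$ is a field, $q\in K^\times$ (a primitive $2\ell$-th root of unity under the hypotheses). $\mathcal H(B_m)$ is the $K$-algebra with generators $T_0,\dots,T_{m-1}$ and relations $T_0^2=1$; $(T_i+1)(T_i-q)=0$ for $1\le i\le m-1$; $T_0T_1T_0T_1=T_1T_0T_1T_0$; $T_iT_{i+1}T_i=T_{i+1}T_iT_{i+1}$; $T_iT_j=T_jT_i$ for $|i-j|>1$. $\mathcal H(D_m)$ is the subalgebra generated by $T_0T_1T_0,T_1,\dots,T_{m-1}$; $\mathcal H(D_{n-1})\subset\mathcal H(D_n)$ via generators of index $\le n-2$. For a bipartition $\lambda$ of $m$, $\tilde D^\lambda$ is the simple head of the Dipper–James–Mathas Specht module and $\mathcal P_m=\{\lambda:\tilde D^\lambda\ne0\}$. With $\sigma(T_0)=-T_0$, $\sigma(T_i)=T_i$ ($i\ne0$), $h$ is the involution of $\mathcal P_m$ with $(\tilde D^\lambda)^\sigma\cong\tilde D^{h(\lambda)}$. When $\mathcal H(D_n)$ is split and $\lambda=h(\lambda)$,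 $\tilde D^\lambda\!\downarrow_{\mathcal H(D_n)}=D_+^\lambda\oplus D_-^\lambda$ with $D_\pm^\lambda$ non-isomorphic irreducible $\mathcal H(D_n)$-modules. *)

(* Defs.v *)
From HB Require Import structures.
From mathcomp Require Import all_boot all_order all_algebra.
Set Implicit Arguments. Unset Strict Implicit. Unset Printing Implicit Defensive.
Import GRing.Theory.
Local Open Scope ring_scope.

(* Conventions: modules are RIGHT modules realised on row vectors K^d;
   a generator acts by right multiplication by a d x d matrix, so the
   matrix of a product T_a T_b is (T a) *m (T b).  Submodules are row
   spaces of d x d matrices (mxalgebra, %MS scope). *)

Section Defs.
Variable K : fieldType.

Definition invariant d (gens : seq 'M[K]_d) (Y : 'M[K]_d) : bool :=
  all (fun g => (Y *m g <= Y)%MS) gens.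

Definition simple_sub d (gens : seq 'M[K]_d) (X : 'M[K]_d) : Prop :=
  [/\ invariant gens X, (0 < \rank X)%N &
      forall Y : 'M[K]_d, invariant gens Y -> (Y <= X)%MS ->
        (Y == (0 : 'M[K]_d))%MS \/ (X <= Y)%MS].

Definition modiso d (gens : seq 'M[K]_d) (W1 W2 : 'M[K]_d) : Prop :=
  exists f : 'M[K]_d,
    [/\ (W1 *m f == W2)%MS, \rank (W1 *m f) = \rank W1 &
        forall g, g \in gens -> W1 *m g *m f = W1 *m f *m g].

Definition is_socle d (gens : seq 'M[K]_d) (U W : 'M[K]_d) : Prop :=
  [/\ (W <= U)%MS,
      (exists s : seq 'M[K]_d,
          (forall X, X \in s -> simple_sub gens X /\ (X <= U)%MS) /\
          (W == \sum_(X <- s) X)%MS) &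
      forall X, simple_sub gens X -> (X <= U)%MS -> (X <= W)%MS].

Definition repB (q : K) (n : nat) d (T : nat -> 'M[K]_d) : Prop :=
  [/\ (0 < n)%N -> T 0 *m T 0 = 1%:M,
      forall i, (1 <= i < n)%N -> (T i + 1%:M) *m (T i - q%:M) = 0,
      (1 < n)%N -> T 0 *m T 1 *m T 0 *m T 1 = T 1 *m T 0 *m T 1 *m T 0,
      forall i, (1 <= i)%N -> (i.+1 < n)%N ->
        T i *m T i.+1 *m T i = T i.+1 *m T i *m T i.+1 &
      forall i j, (j < n)%N -> (i.+1 < j)%N -> T i *m T j = T j *m T i].

Definition gensB n d (T : nat -> 'M[K]_d) : seq 'M[K]_d := [seq T i | i <- iota 0 n].

Definition gensD m d (T : nat -> 'M[K]_d) : seq 'M[K]_d :=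
  T 0 *m T 1 *m T 0 :: [seq T i | i <- iota 1 m.-1].

Definition sigmaT d (T : nat -> 'M[K]_d) : nat -> 'M[K]_d :=
  fun i => if i == 0%N then - T 0 else T i.

Definition sigma_stable n d (T : nat -> 'M[K]_d) : Prop :=
  exists P : 'M[K]_d, P \in unitmx /\
    forall i, (i < n)%N -> T i *m P = P *m sigmaT T i.

(* Presentation of the type-D Iwahori-Hecke algebra H(D_m) (m >= 1):
   X 0 plays the role of T_0T_1T_0, X i (1 <= i < m) of T_i. *)
Definition repD (q : K) (m : nat) d (X : nat -> 'M[K]_d) : Prop :=
  [/\ forall i, (i < m)%N -> (X i + 1%:M) *m (X i - q%:M) = 0,
      forall i, (1 <= i)%N -> (i.+1 < m)%N ->
        X i *m X i.+1 *m X i = X i.+1 *m X i *m X i.+1,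
      forall i j, (1 <= i)%N -> (j < m)%N -> (i.+1 < j)%N ->
        X i *m X j = X j *m X i,
      (1 < m)%N -> X 0 *m X 1 = X 1 *m X 0 &
      (2 < m)%N -> X 0 *m X 2 *m X 0 = X 2 *m X 0 *m X 2] /\
  (forall j, (3 <= j < m)%N -> X 0 *m X j = X j *m X 0).

Definition split_HD (q : K) (m : nat) : Prop :=
  forall d (X : nat -> 'M[K]_d), repD q m X ->
    simple_sub [seq X i | i <- iota 0 m] 1%:M ->
    forall A : 'M[K]_d, (forall i, (i < m)%N -> A *m X i = X i *m A) ->
      exists c : K, A = c%:M.

End Defs.

(* Main.v *)
Require Import Defs.
From mathcomp Require Import all_boot all_order all_algebra zify.
Import GRing.Theory.
Local Open Scope ring_scope.
Set Implicit Arguments.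
Section S.
Lemma commM (K : fieldType) d (A B C : 'M[K]_d) :
  A *m B = B *m A -> A *m C = C *m A -> A *m (B *m C) = (B *m C) *m A.
Proof. by move=> H1 H2; rewrite mulmxA H1 -mulmxA H2 mulmxA. Qed.

Fixpoint Lm (K : fieldType) d (T : nat -> 'M[K]_d) (k : nat) : 'M[K]_d :=
  match k with 0 => T 0%N | k'.+1 => T k *m @Lm K d T k' *m T k end.
Arguments Lm {K d} T k.

Lemma LmA (K : fieldType) (q : K) n d (T : nat -> 'M[K]_d) :
  repB q n T -> forall k j, (k.+1 < j)%N -> (j < n)%N -> T j *m Lm T k = Lm T k *m T j.
Proof.
case=> _ _ _ _ Hc; elim=> [|k IH] j Hkj Hjn /=.
  by rewrite (Hc 0%N j).
apply: commM; first apply: commM.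
- by rewrite (Hc k.+1 j) //; apply: ltn_trans Hkj.
- by apply: IH => //; apply: ltn_trans Hkj.
- by rewrite (Hc k.+1 j).
Qed.

Lemma LmB (K : fieldType) (q : K) n d (T : nat -> 'M[K]_d) :
  repB q n T -> forall k, (1 <= k)%N -> (k < n)%N -> T 0%N *m Lm T k = Lm T k *m T 0%N.
Proof.
move=> HB; have [_ _ Hb _ Hc] := HB.
elim=> [|k IH] // _ Hkn /=.
case: k IH Hkn => [|k] IH Hkn.
  by rewrite /= !mulmxA Hb.
apply: commM; first apply: commM.
- by rewrite (Hc 0%N k.+2).
- by apply: IH => //; apply: ltn_trans Hkn.
- by rewrite (Hc 0%N k.+2).
Qed.

Lemma LmC (K : fieldType) (q : K) n d (T : nat -> 'M[K]_d) :
  repB q n T -> forall k i, (k < n)%N -> (1 <= i)%N -> (i < k)%N ->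
   T i *m Lm T k = Lm T k *m T i.
Proof.
move=> HB; have [_ _ _ Hbr Hc] := HB.
elim=> [|k IH] i // Hkn Hi Hik /=.
rewrite ltnS leq_eqVlt in Hik; case/orP: Hik => [/eqP Eik|Hik].
  subst i; case: k IH Hkn Hi => [|k] IH Hkn Hi //=.
  have HL := LmA HB k k.+2 (leqnn _) Hkn.
  have Br := Hbr k.+1 Hi Hkn.
  have Br' : forall X : 'M[K]_d, T k.+1 *m (T k.+2 *m (T k.+1 *m X)) = T k.+2 *m (T k.+1 *m (T k.+2 *m X)).
    by move=> X; rewrite !mulmxA Br.
  have HL' : forall X : 'M[K]_d, T k.+2 *m (Lm T k *m X) = Lm T k *m (T k.+2 *m X).
    by move=> X; rewrite !mulmxA HL.
  rewrite -!mulmxA Br' HL' [T k.+2 *m (T k.+1 *m T k.+2)]mulmxA -Br -!mulmxA.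
  done.
apply: commM; first apply: commM.
- by rewrite (Hc i k.+1).
- by apply: IH => //; apply: ltn_trans Hkn.
- by rewrite (Hc i k.+1).
Qed.
End S.
Arguments Lm {K d} T k.
Section S2.
Variable K : fieldType.
Lemma invP d (gens : seq 'M[K]_d) (U g : 'M[K]_d) : Defs.invariant gens U -> g \in gens -> (U *m g <= U)%MS.
Proof. by move/allP => H /H. Qed.
Arguments invP {d gens U g}.

Lemma invW d (gens : seq 'M[K]_d) (U W g : 'M[K]_d) :
  Defs.invariant gens U -> g \in gens -> (W <= U)%MS -> (W *m g <= U)%MS.
Proof. by move=> HU Hg HW; apply: submx_trans (submxMr g HW) (invP HU Hg). Qed.
Arguments invW {d gens U W g}.

Lemma inv_cap d (gens : seq 'M[K]_d) (U V : 'M[K]_d) :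
  Defs.invariant gens U -> Defs.invariant gens V -> Defs.invariant gens (U :&: V)%MS.
Proof.
move=> HU HV; apply/allP=> g Hg; rewrite sub_capmx.
by rewrite (invW HU Hg (capmxSl _ _)) (invW HV Hg (capmxSr _ _)).
Qed.
Arguments inv_cap {d gens U V}.

Lemma gensD_u n d (T : nat -> 'M[K]_d) : T 0%N *m T 1%N *m T 0%N \in gensD n T.
Proof. by rewrite inE eqxx. Qed.

Lemma gensD_T n d (T : nat -> 'M[K]_d) i : (1 <= i < n)%N -> T i \in gensD n T.
Proof.
case/andP=> H1 H2; rewrite inE; apply/orP; right; apply: map_f.
rewrite mem_iota; move: H1 H2; case: n => [|n] /=; lia.
Qed.

Lemma gensD_case n d (T : nat -> 'M[K]_d) g : g \in gensD n T ->
  g = T 0%N *m T 1%N *m T 0%N \/ exists2 i, (1 <= i < n)%N & g = T i.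
Proof.
rewrite inE => /orP [/eqP ->|]; first by left.
case/mapP=> i; rewrite mem_iota => /andP [H1 H2] ->; right; exists i => //.
by move: H1 H2; case: n => [|n] /=; lia.
Qed.

Lemma gensD_pred n d (T : nat -> 'M[K]_d) g : g \in gensD n.-1 T -> g \in gensD n T.
Proof.
case/gensD_case => [->|[i /andP [H1 H2] ->]]; first exact: gensD_u.
by apply: gensD_T; rewrite H1 /=; apply: leq_trans H2 (leq_pred _).
Qed.

Lemma proj_comm d (U V g : 'M[K]_d) : (U :&: V)%MS = 0 -> (U + V == 1%:M)%MS ->
  (U *m g <= U)%MS -> (V *m g <= V)%MS -> g *m proj_mx U V = proj_mx U V *m g.
Proof.
move=> H0 /andP [_ H1] HU HV.
case/sub_addsmxP: H1 => [[a b] /= E].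
have -> : g *m proj_mx U V = 1%:M *m g *m proj_mx U V by rewrite mul1mx.
have -> : proj_mx U V *m g = 1%:M *m proj_mx U V *m g by rewrite mul1mx.
rewrite E !mulmxDl.
rewrite (proj_mx_id H0 (submxMl a _)) (proj_mx_0 H0 (submxMl b _)).
have HaU : (a *m U *m g <= U)%MS := submx_trans (submxMr g (submxMl a U)) HU.
have HbV : (b *m V *m g <= V)%MS := submx_trans (submxMr g (submxMl b V)) HV.
by rewrite (proj_mx_id H0 HaU) (proj_mx_0 H0 HbV) mul0mx.
Qed.


Lemma simple_image d (gens : seq 'M[K]_d) (Dp F X : 'M[K]_d) :
 (forall g W : 'M[K]_d, g \in gens -> (W <= Dp)%MS -> W *m g *m F = W *m F *m g) ->
 (forall W : 'M[K]_d, (W <= Dp)%MS -> \rank (W *m F) = \rank W) ->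
 simple_sub gens X -> (X <= Dp)%MS -> simple_sub gens (X *m F).
Proof.
move=> Hc Hr [HX Hpos Hmin] XD; split.
- by apply/allP => g Hg; rewrite -Hc //; apply: submxMr (invP HX Hg).
- by rewrite Hr.
move=> Y HY YXF.
pose Y' := (X :&: kermx (F *m cokermx Y))%MS.
have Y'X : (Y' <= X)%MS := capmxSl _ _.
have Y'D : (Y' <= Dp)%MS := submx_trans Y'X XD.
have key : forall Z : 'M[K]_d, (Z <= X)%MS -> (Z <= Y')%MS = (Z *m F <= Y)%MS.
  by move=> Z ZX; rewrite sub_capmx ZX /= sub_kermx submxE mulmxA.
have HY' : Defs.invariant gens Y'.
  apply/allP => g Hg.
  have ZX : (Y' *m g <= X)%MS := invW HX Hg Y'X.
  rewrite key // Hc //.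
  apply: invW HY Hg _.
  by rewrite -key.
case: (Hmin Y' HY' Y'X) => [/eqmx0P Y'0|XY']; last by right; rewrite -key.
left; apply/eqmx0P.
case/submxP: YXF => D ED.
have DX : (D *m X <= Y')%MS.
  by rewrite key ?submxMl // -mulmxA -ED.
move: DX; rewrite Y'0 submx0 => /eqP DX0.
by rewrite ED mulmxA DX0 mul0mx.
Qed.

Lemma sum_sub d (s : seq 'M[K]_d) (F W : 'M[K]_d) :
  (forall X, X \in s -> (X *m F <= W)%MS) -> ((\sum_(X <- s) X)%MS *m F <= W)%MS.
Proof.
elim: s => [|X s IH] H; first by rewrite big_nil mul0mx sub0mx.
rewrite big_cons addsmxMr addsmx_sub H ?mem_head //=.
by apply: IH => Y HY; apply: H; rewrite inE HY orbT.
Qed.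

Lemma transfer d (gens : seq 'M[K]_d) (Dp Dm Wp Wm F : 'M[K]_d) :
 (forall g W : 'M[K]_d, g \in gens -> (W <= Dp)%MS -> W *m g *m F = W *m F *m g) ->
 (forall W : 'M[K]_d, (W <= Dp)%MS -> \rank (W *m F) = \rank W) ->
 (Dp *m F <= Dm)%MS ->
 is_socle gens Dp Wp -> is_socle gens Dm Wm -> (Wp *m F <= Wm)%MS.
Proof.
move=> Hc Hr HDF [_ [s [Hs Es]] _] [_ _ Hm].
apply: submx_trans (submxMr F (proj1 (andP Es))) _.
apply: sum_sub => X /Hs [HX XD].
apply: Hm; first exact: simple_image Hc Hr HX XD.
exact: submx_trans (submxMr F XD) HDF.
Qed.

Lemma unitT d (q : K) (A : 'M[K]_d) : q != 0 ->
  (A + 1%:M) *m (A - q%:M) = 0 -> A \in unitmx.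
Proof.
move=> q0 H.
have E : A *m (A + (1 - q)%:M) = q%:M.
  transitivity ((A + 1%:M) *m (A - q%:M) + q%:M); last by rewrite H add0r.
  rewrite mulmxDr mulmxDl !mulmxBr mul1mx !mul_mx_scalar.
rewrite scalemx1 scalerBl scale1r.
  by rewrite -!addrA; congr (_ + _); rewrite addrC -!addrA addKr.
have : A *m (q^-1 *: (A + (1 - q)%:M)) = 1%:M.
  by rewrite -scalemxAr E -[q%:M]scalemx1 scalerA mulVf // scalemx1.
by case/mulmx1_unit.
Qed.

Lemma twist (q : K) n d (T : nat -> 'M[K]_d) (U : 'M[K]_d) :
  repB q n T -> (1 < n)%N -> Defs.invariant (gensD n T) U ->
  Defs.invariant (gensD n T) (U *m T 0%N).
Proof.
move=> HB n1 HU; have [H0 _ _ _ Hc] := HB; have T00 := H0 (ltnW n1).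
apply/allP => g /gensD_case [->| [i /andP [i1 iN] ->]].
- have -> : U *m T 0%N *m (T 0%N *m T 1%N *m T 0%N) = U *m T 1%N *m T 0%N.
    by rewrite !mulmxA -[U *m T 0%N *m T 0%N]mulmxA T00 mulmx1.
  by apply: submxMr; apply: invP HU (gensD_T _ _ _ _); rewrite n1.
case: i i1 iN => [|[|i]] // _ iN.
  have -> : U *m T 0%N *m T 1%N = U *m (T 0%N *m T 1%N *m T 0%N) *m T 0%N.
    by rewrite !mulmxA -[U *m T 0%N *m T 1%N *m T 0%N *m T 0%N]mulmxA T00 mulmx1.
  by apply: submxMr; apply: invP HU (gensD_u _ _).
rewrite -!mulmxA (Hc 0%N i.+2) // mulmxA.
by apply: submxMr; apply: invP HU (gensD_T _ _ _ _); rewrite iN.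
Qed.
Arguments twist {q n d T U}.

Lemma LmInv (q : K) n d (T : nat -> 'M[K]_d) (W : 'M[K]_d) :
  repB q n T -> Defs.invariant (gensD n T) W ->
  forall k, (1 <= k)%N -> (k < n)%N -> forall Z : 'M[K]_d, (Z <= W)%MS ->
  (Z *m (T 0%N *m Lm T k) <= W)%MS.
Proof.
move=> HB HW; have [_ _ _ _ Hc] := HB.
elim=> [|k IH] // _ kn Z HZ.
case: k IH kn => [|k] IH kn.
  rewrite /= !mulmxA.
  have -> : Z *m T 0%N *m T 1%N *m T 0%N = Z *m (T 0%N *m T 1%N *m T 0%N) by rewrite !mulmxA.
  apply: invW HW (gensD_T _ _ _ _) (invW HW (gensD_u _ _) HZ); by rewrite kn.
have -> : Lm T k.+2 = T k.+2 *m Lm T k.+1 *m T k.+2 by [].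
have IH' := IH isT (ltn_trans (ltnSn _) kn).
move: IH'; move: (Lm T k.+1) => L IH'.
rewrite !mulmxA -[Z *m T 0%N *m T k.+2]mulmxA (Hc 0%N k.+2) //.
rewrite mulmxA -[Z *m T k.+2 *m T 0%N *m L]mulmxA.
have HZ2 : (Z *m T k.+2 <= W)%MS by apply: invW HW (gensD_T _ _ _ _) HZ; rewrite kn.
apply: invW HW (gensD_T _ _ _ _) _; first by rewrite kn.
exact: IH'.
Qed.

Lemma Lm_unit n d (T : nat -> 'M[K]_d) :
  (forall i, (i < n)%N -> T i \in unitmx) -> forall k, (k < n)%N -> Lm T k \in unitmx.
Proof.
move=> HU; elim=> [|k IH] kn /=; first exact: HU.
by rewrite !unitmx_mul HU // IH //; apply: ltn_trans kn.
Qed.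

Lemma capT0 (q : K) n d (T : nat -> 'M[K]_d) (U V : 'M[K]_d) :
  repB q n T -> (1 < n)%N -> simple_sub (gensB n T) 1%:M ->
  simple_sub (gensD n T) U -> (0 < \rank V)%N -> (U :&: V)%MS = 0 ->
  (U *m T 0%N :&: U <= (0 : 'M[K]_d))%MS.
Proof.
move=> HB n1 [_ _ Hmin] [HU Upos HminU] Vpos UV.
have [H0 _ _ _ _] := HB; have T00 := H0 (ltnW n1).
have HZ := inv_cap (twist HB n1 HU) HU.
case: (HminU _ HZ (capmxSr _ _)) => [/eqmx0P Z0|UZ]; first by rewrite Z0 sub0mx.
have UT : (U <= U *m T 0%N)%MS by apply: submx_trans UZ (capmxSl _ _).
have UT' : (U *m T 0%N <= U)%MS.
  by have := submxMr (T 0%N) UT; rewrite -mulmxA T00 mulmx1.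
have HUB : Defs.invariant (gensB n T) U.
  apply/allP => g /mapP [i]; rewrite mem_iota add0n => /andP [_ iN] ->.
  case: i iN => [|i] iN //.
  by apply: invP HU (gensD_T _ _ _ _); rewrite iN.
case: (Hmin U HUB (submx1 _)) => [/eqmx0P U0|UU].
  by move: Upos; rewrite U0 mxrank0.
have VUV : (V <= U :&: V)%MS.
  by rewrite sub_capmx submx_refl andbT; exact: submx_trans (submx1 _) UU.
by rewrite UV in VUV; move: Vpos; rewrite (submx0null VUV) mxrank0.
Qed.

Lemma nilkill d (gens : seq 'M[K]_d) (U A : 'M[K]_d) : simple_sub gens U ->
  A *m A = 0 -> (forall g, g \in gens -> A *m g = g *m A) -> (U *m A <= U)%MS ->
  U *m A = 0.
Proof.
move=> [HU Upos Hmin] AA HA UA.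
have HY : Defs.invariant gens (U *m A).
  by apply/allP => g Hg; rewrite -mulmxA HA // mulmxA; apply: submxMr (invP HU Hg).
case: (Hmin _ HY UA) => [/eqmx0P //|UU].
have := submxMr A UU; rewrite -mulmxA AA mulmx0 submx0 => /eqP UA0.
by move: UU; rewrite UA0 => /submx0null U0; move: Upos; rewrite U0 mxrank0.
Qed.

Lemma make_F d (gensN gensS : seq 'M[K]_d) (U V X : 'M[K]_d) :
  (U :&: V)%MS = 0 -> (U + V == 1%:M)%MS ->
  Defs.invariant gensN U -> Defs.invariant gensN V ->
  (forall g, g \in gensS -> g \in gensN) ->
  X \in unitmx -> (U *m X :&: U <= (0 : 'M[K]_d))%MS ->
  (forall g W : 'M[K]_d, g \in gensS -> (W <= U)%MS -> W *m g *m X = W *m X *m g) ->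
  [/\ forall g W : 'M[K]_d, g \in gensS -> (W <= U)%MS ->
        W *m g *m (X *m proj_mx V U) = W *m (X *m proj_mx V U) *m g,
      forall W : 'M[K]_d, (W <= U)%MS -> \rank (W *m (X *m proj_mx V U)) = \rank W &
      (U *m (X *m proj_mx V U) <= V)%MS].
Proof.
move=> UV UV1 HU HV Hsub Xu UX Hc.
have VU : (V :&: U)%MS = 0 by rewrite capmxC.
have VU1 : (V + U == 1%:M)%MS by rewrite addsmxC.
split.
- move=> g W Hg HW.
  have Hp : g *m proj_mx V U = proj_mx V U *m g.
    by apply: proj_comm => //; apply: invP; [exact: HV| exact: Hsub | exact: HU | exact: Hsub].
  move: Hp; move: (proj_mx V U) => P Hp.
  by rewrite !mulmxA Hc // -[W *m X *m g *m P]mulmxA Hp mulmxA.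
- move=> W HW; rewrite mulmxA.
  have := mxrank_mul_ker (W *m X) (proj_mx V U).
  have -> : \rank (W *m X :&: kermx (proj_mx V U)) = 0%N.
    apply/eqP; rewrite mxrank_eq0 -submx0.
    set z := (W *m X :&: kermx (proj_mx V U))%MS.
    have z1 : (z <= V + U)%MS by apply: submx_trans (submx1 _) _; case/andP: VU1.
    have zk : z *m proj_mx V U = 0 by apply/sub_kermxP; exact: capmxSr.
    have zU : (z <= U)%MS.
      by rewrite -(add_proj_mx VU z1) zk add0r proj_mx_sub.
    apply: submx_trans UX; rewrite sub_capmx zU andbT.
    by apply: submx_trans (capmxSl _ _) (submxMr _ HW).
  by rewrite addn0 => ->; rewrite mxrankMfree // row_free_unit.
- by rewrite mulmxA proj_mx_sub.
Qed.

Lemma kill_neg1 d (U W A : 'M[K]_d) : U *m (A + 1%:M) = 0 -> (W <= U)%MS -> W *m A = - W.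
Proof.
move=> H /submxP [D ->]; apply/eqP; rewrite -subr_eq0 opprK.
by rewrite -mulmxA -mulmxDr -{2}[U]mulmx1 -mulmxDr H mulmx0.
Qed.

Lemma case2 d (T : nat -> 'M[K]_d) (U : 'M[K]_d) : repB (-1) 2 T ->
  simple_sub (gensD 2 T) U -> forall W : 'M[K]_d, (W <= U)%MS ->
  W *m (T 0%N *m T 1%N *m T 0%N) *m T 0%N = W *m T 0%N *m (T 0%N *m T 1%N *m T 0%N).
Proof.
move=> [H0 Hq Hb _ _] HU W HW.
have T00 := H0 isT.
have [HUi _ _] := HU.
set u := T 0%N *m T 1%N *m T 0%N.
have Hmem : forall g, g \in gensD 2 T -> g = u \/ g = T 1%N.
  move=> g /gensD_case [->|[i /andP [i1 i2] ->]]; first by left.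
  by right; case: i i1 i2 => [|[|]].
have uT1 : u *m T 1%N = T 1%N *m u by rewrite /u (Hb isT) -!mulmxA.
have A1 : (T 1%N + 1%:M) *m (T 1%N + 1%:M) = 0.
  by have := Hq 1%N isT; rewrite raddfN /= opprK.
have Eu : u + 1%:M = T 0%N *m (T 1%N + 1%:M) *m T 0%N.
  by rewrite mulmxDr mulmx1 mulmxDl T00.
have A2 : (u + 1%:M) *m (u + 1%:M) = 0.
  rewrite Eu !mulmxA -[T 0%N *m (T 1%N + 1%:M) *m T 0%N *m T 0%N]mulmxA T00 mulmx1.
  by rewrite -[T 0%N *m (T 1%N + 1%:M) *m (T 1%N + 1%:M)]mulmxA A1 mulmx0 mul0mx.
have subU : forall g, g \in gensD 2 T -> (U *m (g + 1%:M) <= U)%MS.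
  by move=> g Hg; rewrite mulmxDr mulmx1; apply: addmx_sub (invP HUi Hg) (submx_refl _).
have HT1 : U *m (T 1%N + 1%:M) = 0.
  apply: nilkill HU A1 _ (subU _ (gensD_T _ _ _ _)) => //.
  by move=> g /Hmem [->|->]; rewrite mulmxDl mulmxDr mul1mx mulmx1 ?uT1.
have Hu : U *m (u + 1%:M) = 0.
  apply: nilkill HU A2 _ (subU _ (gensD_u _ _)).
  by move=> g /Hmem [->|->]; rewrite mulmxDl mulmxDr mul1mx mulmx1 ?uT1.
rewrite (kill_neg1 Hu HW) mulNmx.
have -> : W *m T 0%N *m u = W *m T 1%N *m T 0%N.
  by rewrite /u !mulmxA -[W *m T 0%N *m T 0%N]mulmxA T00 mulmx1.
by rewrite (kill_neg1 HT1 HW) mulNmx.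
Qed.
End S2.

Unset Implicit Arguments.

Theorem theorem3p10 (K : fieldType) (q : K) (n : nat) :
  q != 0 ->
  (2%:R : K) != 0 ->
  \prod_(1 <= i < n) (1 + q ^+ i) = 0 ->
  split_HD q n -> split_HD q n.-1 ->
  forall d (T : nat -> 'M[K]_d),
    repB q n T ->
    simple_sub (gensB n T) 1%:M ->
    sigma_stable n T ->
    forall Dp Dm : 'M[K]_d,
      simple_sub (gensD n T) Dp -> simple_sub (gensD n T) Dm ->
      (Dp :&: Dm == (0 : 'M[K]_d))%MS -> (Dp + Dm == (1%:M : 'M[K]_d))%MS ->
      ~ modiso (gensD n T) Dp Dm ->
      forall Wp Wm : 'M[K]_d,
        is_socle (gensD n.-1 T) Dp Wp -> is_socle (gensD n.-1 T) Dm Wm ->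
        modiso (gensD n.-1 T) Wp Wm.
Proof.
move=> q0 _ Hprod _ _ d T HB HsB _ Dp Dm HDp HDm Hcap Hsum _ Wp Wm HWp HWm.
have n2 : (1 < n)%N.
  rewrite ltnNge; apply/negP => n1; move: Hprod; rewrite big_geq //.
  by move=> /eqP; rewrite oner_eq0.
have [H0 Hq Hb Hbr Hc] := HB.
have T00 := H0 (ltnW n2).
have UV : (Dp :&: Dm)%MS = 0 by apply/eqmx0P.
have VU : (Dm :&: Dp)%MS = 0 by rewrite capmxC.
have VU1 : (Dm + Dp == 1%:M)%MS by rewrite addsmxC.
have [HIp posp _] := HDp.
have [HIm posm _] := HDm.
have cp := capT0 HB n2 HsB HDp posm UV.
have cm := capT0 HB n2 HsB HDm posp VU.
have HTu : forall i, (i < n)%N -> T i \in unitmx.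
  case=> [|i] iN; first by case: (mulmx1_unit T00).
  by apply: (unitT q0); apply: Hq.
have Hsub : forall g, g \in gensD n.-1 T -> g \in gensD n T := @gensD_pred K n d T.
have [X [Xu HX]] : exists X : 'M[K]_d, X \in unitmx /\
   forall U : 'M[K]_d, simple_sub (gensD n T) U ->
     (U *m X <= U *m T 0%N)%MS /\
     forall g W : 'M[K]_d, g \in gensD n.-1 T -> (W <= U)%MS -> W *m g *m X = W *m X *m g.
  case: (eqVneq n 2) => [En|Nn].
    subst n.
    have q1 : q = -1.
      move: Hprod; rewrite big_nat1 expr1 => /eqP; rewrite addrC addr_eq0 => /eqP //.
    subst q.
    exists (T 0%N); split; first exact: HTu.
    move=> U HU; split; first exact: submx_refl.
    move=> g W /gensD_case [->|[i /andP [i1 i2] _]]; last by case: i i1 i2.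
    by move=> HW; apply: case2 HB HU W HW.
  have n3 : (1 < n.-1)%N by move: n2 Nn; clear; case: n => [|[|[|n]]].
  have nn : (n.-1 < n)%N by rewrite prednK // ltnW.
  have n1 : (1 <= n.-1)%N by rewrite ltnW.
  set L := Lm T n.-1.
  exists L; split; first exact: (@Lm_unit K n d T HTu n.-1 nn).
  move=> U [HU _ _]; split.
    have -> : U *m L = U *m T 0%N *m (T 0%N *m L).
      by rewrite -mulmxA (mulmxA (T 0%N)) T00 mul1mx.
    exact: LmInv HB (twist _ HB n2 HU) n.-1 n1 nn _ (submx_refl _).
  have L0 : T 0%N *m L = L *m T 0%N := LmB HB n.-1 n1 nn.
  have LC : forall i, (1 <= i)%N -> (i < n.-1)%N -> T i *m L = L *m T i.
    by move=> i i1 i2; apply: (LmC HB n.-1 i nn i1 i2).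
  have LCm : forall g, g \in gensD n.-1 T -> g *m L = L *m g.
    move=> g /gensD_case [->|[i /andP [i1 i2] ->]]; last exact: LC.
    symmetry; apply: commM; first apply: commM.
    - by rewrite L0.
    - by rewrite LC.
    - by rewrite L0.
  by move=> g W Hg _; rewrite -!mulmxA LCm.
have Fp := make_F (gensD n T) (gensD n.-1 T) UV Hsum HIp HIm Hsub Xu (submx_trans (capmxS (proj1 (HX _ HDp)) (submx_refl _)) cp)
  (fun g W Hg HW => proj2 (HX _ HDp) g W Hg HW).
have Fm := make_F (gensD n T) (gensD n.-1 T) VU VU1 HIm HIp Hsub Xu (submx_trans (capmxS (proj1 (HX _ HDm)) (submx_refl _)) cm)
  (fun g W Hg HW => proj2 (HX _ HDm) g W Hg HW).
have [Fp1 Fp2 Fp3] := Fp.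
have [Fm1 Fm2 Fm3] := Fm.
have Tp := transfer Fp1 Fp2 Fp3 HWp HWm.
have Tm := transfer Fm1 Fm2 Fm3 HWm HWp.
have [WpD _ _] := HWp.
have [WmD _ _] := HWm.
have r1 := mxrankS Tp; rewrite (Fp2 _ WpD) in r1.
have r2 := mxrankS Tm; rewrite (Fm2 _ WmD) in r2.
exists (X *m proj_mx Dm Dp); split.
- rewrite -(mxrank_leqif_eq Tp).2 (Fp2 _ WpD).
  by rewrite eqn_leq r1 r2.
- exact: Fp2.
- by move=> g Hg; apply: Fp1.
Qed.
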